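(* Let $d,N\in\mathbb{N}$, let $k:\mathbb{R}^d\times\mathbb{R}^d\rightarrow\mathbb{R}$ be a continuous covariance kernel, and let $\{(\bm{x}^{(n)},y^{(n)})\}_{n=1}^N\subset\mathbb{R}^d\times\mathbb{R}$ be training data. Let $\sigma_n^2>0$. Define $\bm{K}\in\mathbb{R}^{N\times N}$ by $K_{ij}=k(\bm{x}^{(i)},\bm{x}^{(j)})$, $\bm{y}=(y^{(1)},\ldots,y^{(N)})^T$, $\bm{\lambda}=(\bm{K}+\sigma_n^2\bm{I}_N)^{-1}\bm{y}$, $k_i(\bm{z})=k(\bm{x}^{(i)},\bm{z})$ for $i=1,\ldots,N$, and consider the Gaussian process posterior mean function $\mu(\bm{z})=\sum_{i=1}^N \lambda_i k_i(\bm{z})$. Let $\bm{x}\in\mathbb{R}^d$ and $\bm{b}\in\mathbb{R}^d$ with positive entries, and let $H=\{\bm{z}\in\mathbb{R}^d: |z_j-x_j|\leq b_j \text{ for all } j=1,\ldots,d\}$ be the hyperrectangle with center $\bm{x}$ and edge widths $2\bm{b}$. Assume each $k_i$ is differentiable on $H$, and for each $i\in\{1,\ldots,N\}$ and $j\in\{1,\ldots,d\}$ let $\bm{L}_{k,i}^{\partial j}=\begin{bmatrix}u_{ij}\\ \ell_{ij}\end{bmatrix}\in\mathbb{R}^2$ be a vector of partial derivative bounds, i.e. $\ell_{ij}\leq \frac{\partial}{\partial z_j}k_i(\bm{z})\leq u_{ij}$ for all $\bm{z}\in H$ (first entry an upper bound, second entry a lower bound). Define $$\bm{R}(\lambda_i)=\begin{cases}\bm{I}_2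 & \lambda_i>0,\\ \begin{bmatrix}0&1\\1&0\end{bmatrix} & \lambda_i\leq 0,\end{cases}$$ and, for each $j$, the vector $\bm{v}_j=\sum_{i=1}^N \bm{R}(\lambda_i)\lambda_i\bm{L}_{k,i}^{\partial j}\in\mathbb{R}^2$. Then $$L_{\mu}(\bm{x},\bm{b})=\sqrt{\sum_{j=1}^d \max\left\{ (v_{j,1})^2,(v_{j,2})^2 \right\}}$$ is a local Lipschitz constant of $\mu$ on $H$, i.e. $|\mu(\bm{z})-\mu(\bm{z}')|\leq L_{\mu}(\bm{x},\bm{b})\,\|\bm{z}-\bm{z}'\|$ for all $\bm{z},\bm{z}'\in H$, where $\|\cdot\|$ is the Euclidean norm.
   Context: $\bm{I}_n$ denotes the $n\times n$ identity matrix and $\|\cdot\|$ the Euclidean norm. In the paper's notation the constant is written $\sqrt{\sum_{j=1}^d \max\{ (\sum_{i=1}^N\bm{R}(\lambda_i)\lambda_i\bm{L}_{k,i}^{\partial j})^2\}}$, where the square is taken entrywise on the 2-vector and the maximum is over its two entries. *)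

(* Defs.v *)
From HB Require Import structures.
From mathcomp Require Import all_boot all_order all_algebra.
From mathcomp Require Import all_classical all_reals all_analysis.
Set Implicit Arguments. Unset Strict Implicit. Unset Printing Implicit Defensive.
Import Order.TTheory GRing.Theory Num.Theory.
Import numFieldNormedType.Exports.
Local Open Scope ring_scope.

Section GPDefs.
Variable R : realType.

(* Euclidean norm on R^d (row vectors); note MathComp's `|.| on matrices is the sup norm. *)
Definition eucl_norm (d : nat) (z : 'rV[R]_d) : R :=
  Num.sqrt (\sum_(j < d) (z 0 j) ^+ 2).

Definition unit_vec (d : nat) (j : 'I_d) : 'rV[R]_d := delta_mx 0 j.

Definition covariance_kernel (d : nat) (k : 'rV[R]_d -> 'rV[R]_d -> R) : Prop :=
  (forall x y, k x y = k y x) /\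
  (forall (n : nat) (xs : 'I_n -> 'rV[R]_d) (c : 'I_n -> R),
      0 <= \sum_(i < n) \sum_(j < n) c i * c j * k (xs i) (xs j)).

Definition gram (d N : nat) (k : 'rV[R]_d -> 'rV[R]_d -> R) (xs : 'I_N -> 'rV[R]_d)
  : 'M[R]_N := \matrix_(i, j) k (xs i) (xs j).

Definition gp_lambda (d N : nat) (k : 'rV[R]_d -> 'rV[R]_d -> R) (xs : 'I_N -> 'rV[R]_d)
  (y : 'cV[R]_N) (sn2 : R) : 'cV[R]_N :=
  invmx (gram k xs + sn2%:M) *m y.

Definition gp_mean (d N : nat) (k : 'rV[R]_d -> 'rV[R]_d -> R) (xs : 'I_N -> 'rV[R]_d)
  (y : 'cV[R]_N) (sn2 : R) (z : 'rV[R]_d) : R :=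
  \sum_(i < N) gp_lambda k xs y sn2 i 0 * k (xs i) z.

Definition hyperrect (d : nat) (x b : 'rV[R]_d) : set 'rV[R]_d :=
  [set z | forall j : 'I_d, `|z 0 j - x 0 j| <= b 0 j].

Definition Rmat (l : R) : 'M[R]_2 :=
  if 0 < l then 1%:M else \matrix_(i, j) (if i == j then 0 else 1).

Definition vj (N : nat) (lam : 'cV[R]_N) (Lb : 'I_N -> 'cV[R]_2) : 'cV[R]_2 :=
  \sum_(i < N) (Rmat (lam i 0) *m (lam i 0 *: Lb i)).

Definition L_mu (d N : nat) (lam : 'cV[R]_N) (Lb : 'I_N -> 'I_d -> 'cV[R]_2) : R :=
  Num.sqrt (\sum_(j < d)
     Num.max ((vj lam (fun i => Lb i j)) 0 0 ^+ 2) ((vj lam (fun i => Lb i j)) 1 0 ^+ 2)).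

End GPDefs.

(* Main.v *)
Require Import Defs.
From HB Require Import structures.
From mathcomp Require Import all_boot all_order all_algebra.
From mathcomp Require Import all_classical all_reals all_analysis.
From mathcomp Require Import ring lra.
Import Order.TTheory GRing.Theory Num.Theory.
Import numFieldNormedType.Exports.
Local Open Scope ring_scope.
Local Open Scope classical_set_scope.

Lemma cs_sq (R : realType) (d : nat) (a w : 'I_d -> R) :
  (\sum_(j < d) a j * w j) ^+ 2 <= (\sum_(j < d) a j ^+ 2) * (\sum_(j < d) w j ^+ 2).
Proof.
have H0 : 0 <= \sum_(i < d) \sum_(j < d) (a i * w j - a j * w i) ^+ 2.
  by apply: sumr_ge0 => i _; apply: sumr_ge0 => j _; exact: sqr_ge0.
have E : \sum_(i < d) \sum_(j < d) (a i * w j - a j * w i) ^+ 2 =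
   2 * ((\sum_(j < d) a j ^+ 2) * (\sum_(j < d) w j ^+ 2)) - 2 * (\sum_(j < d) a j * w j) ^+ 2.
  have E1 : (\sum_(j < d) a j ^+ 2) * (\sum_(j < d) w j ^+ 2) =
     \sum_(i < d) \sum_(j < d) a i ^+ 2 * w j ^+ 2.
    by rewrite mulr_suml; apply: eq_bigr => i _; rewrite mulr_sumr.
  have E2 : (\sum_(j < d) a j ^+ 2) * (\sum_(j < d) w j ^+ 2) =
     \sum_(i < d) \sum_(j < d) a j ^+ 2 * w i ^+ 2.
    by rewrite mulrC mulr_suml; apply: eq_bigr => i _; rewrite mulr_sumr;
      apply: eq_bigr => j _; rewrite mulrC.
  have E3 : (\sum_(j < d) a j * w j) ^+ 2 =
     \sum_(i < d) \sum_(j < d) (a i * w i) * (a j * w j).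
    by rewrite expr2 mulr_suml; apply: eq_bigr => i _; rewrite mulr_sumr.
  have -> : 2 * ((\sum_(j < d) a j ^+ 2) * (\sum_(j < d) w j ^+ 2)) =
     (\sum_(j < d) a j ^+ 2) * (\sum_(j < d) w j ^+ 2) + (\sum_(j < d) a j ^+ 2) * (\sum_(j < d) w j ^+ 2) by ring.
  rewrite {1}E1 E2 E3 -!big_split /= mulr_sumr -sumrB; apply: eq_bigr => i _.
  rewrite -!big_split mulr_sumr -sumrB; apply: eq_bigr => j _ /=; ring.
lra.
Qed.

Lemma cs (R : realType) (d : nat) (a w : 'I_d -> R) :
  `|\sum_(j < d) a j * w j| <= Num.sqrt (\sum_(j < d) a j ^+ 2) * Num.sqrt (\sum_(j < d) w j ^+ 2).
Proof.
rewrite -sqrtrM; last by apply: sumr_ge0 => j _; exact: sqr_ge0.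
rewrite -sqrtr_sqr ler_sqrt ?cs_sq //.
by apply: mulr_ge0; apply: sumr_ge0 => j _; exact: sqr_ge0.
Qed.
Lemma seg_in (R : realType) (d : nat) (x b z z' : 'rV[R]_d) (t : R) :
  hyperrect x b z -> hyperrect x b z' -> 0 <= t <= 1 ->
  hyperrect x b (t *: (z - z') + z').
Proof.
move=> hz hz' /andP[t0 t1] j; rewrite !mxE.
have -> : t * (z 0 j - z' 0 j) + z' 0 j - x 0 j
   = t * (z 0 j - x 0 j) + (1 - t) * (z' 0 j - x 0 j) by ring.
have h3 : 0 <= 1 - t by rewrite subr_ge0.
apply: (le_trans (ler_normD _ _)); rewrite !normrM (ger0_norm t0) (ger0_norm h3).
have := hz j; have := hz' j => h1 h2.
have k1 := ler_wpM2l t0 h2.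
have k2 := ler_wpM2l h3 h1.
lra.
Qed.
Arguments seg_in {R d x b z z' t}.

Lemma mvt_H (R : realType) (d : nat) (x b : 'rV[R]_d) (f : 'rV[R]_d -> R)
  (hf : forall p, hyperrect x b p -> differentiable f p) (z z' : 'rV[R]_d) :
  hyperrect x b z -> hyperrect x b z' ->
  exists2 c, hyperrect x b c &
    f z - f z' = \sum_(j < d) 'D_(unit_vec R j) f c * (z - z') 0 j.
Proof.
move=> hz hz'.
set w := z - z'.
pose g := fun t : R => f (t *: w + z').
have gD : forall t : R, 0 <= t <= 1 -> is_derive t 1 g ('D_w f (t *: w + z')).
  move=> t ht.
  have eqf : (fun h : R => h^-1 *: (g (h *: 1 + t) - g t)) =
             (fun h : R => h^-1 *: (f (h *: w + (t *: w + z')) - f (t *: w + z'))).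
    apply: funext => h; rewrite /g; congr (_ *: (f _ - _)).
    by rewrite scaler1 scalerDl addrA.
  have dg : derivable g t 1.
    rewrite /derivable eqf.
    have hd : derivable f (t *: w + z') w.
      by apply: diff_derivable; exact: (hf _ (seg_in hz hz' ht)).
    exact: hd.
  have := derivableP dg.
  suff -> : 'D_1 g t = 'D_w f (t *: w + z') by [].
  by rewrite /derive eqf.
have gc : {within `[0, 1], continuous g}.
  apply: continuous_in_subspaceT => t; rewrite inE /= in_itv /= => ht.
  have [dg _] := gD t ht.
  by apply: differentiable_continuous; apply/derivable1_diffP.
have gD' : forall t : R, t \in `]0, 1[%R -> is_derive t 1 g ('D_w f (t *: w + z')).
  move=> t; rewrite in_itv /= => /andP[a1 a2]; apply: gD.
  by rewrite (ltW a1) (ltW a2).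
have [c hc eq] := @MVT R g (fun t => 'D_w f (t *: w + z')) 0 1 ltr01 gD' gc.
have hc' : 0 <= c <= 1 by move: hc; rewrite in_itv /= => /andP[a1 a2]; rewrite (ltW a1) (ltW a2).
exists (c *: w + z'); first exact: seg_in.
move: eq; rewrite /g scale1r scale0r add0r /w subrK subr0 mulr1 => ->.
have hp := hf _ (seg_in hz hz' hc').
set p := c *: (z - z') + z' in hp *.
rewrite deriveE //.
rewrite {1}(row_sum_delta (z - z')) linear_sum; apply: eq_bigr => j _.
by rewrite linearZ /= mulrC deriveE // /unit_vec.
Qed.
Lemma Rmat_e0 (R : realType) (l : R) (v : 'cV[R]_2) :
  (Rmat l *m (l *: v)) 0 0 = if 0 < l then l * v 0 0 else l * v 1 0.
Proof.
rewrite /Rmat; case: ifP => _; rewrite mxE !big_ord_recl big_ord0 !mxE /=.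
all: rewrite ?mul0r ?mul1r ?addr0 ?add0r //.
all: by congr (_ * v _ _); exact: val_inj.
Qed.
Lemma Rmat_e1 (R : realType) (l : R) (v : 'cV[R]_2) :
  (Rmat l *m (l *: v)) 1 0 = if 0 < l then l * v 1 0 else l * v 0 0.
Proof.
rewrite /Rmat; case: ifP => _; rewrite mxE !big_ord_recl big_ord0 !mxE /=.
all: rewrite ?mul0r ?mul1r ?addr0 ?add0r //.
all: by congr (_ * v _ _); exact: val_inj.
Qed.
Arguments mvt_H {R d x b f} hf {z z'}.

Lemma sq_le_max (R : realType) (lo hi a : R) : lo <= a <= hi ->
  a ^+ 2 <= Num.max (hi ^+ 2) (lo ^+ 2).
Proof.
move=> /andP[h1 h2]; rewrite le_max.
case: (lerP 0 a) => ha.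
  by apply/orP; left; rewrite -!expr2 ler_sqr // ?nnegrE; [lra|lra] || nra.
apply/orP; right; nra.
Qed.

Theorem theorem2 (R : realType) (d N : nat)
  (k : 'rV[R]_d -> 'rV[R]_d -> R)
  (hcont : continuous (fun p : 'rV[R]_d * 'rV[R]_d => k p.1 p.2))
  (hcov : covariance_kernel k)
  (xs : 'I_N -> 'rV[R]_d) (y : 'cV[R]_N) (sn2 : R) (hsn2 : 0 < sn2)
  (x b : 'rV[R]_d) (hb : forall j : 'I_d, 0 < b 0 j)
  (hdiff : forall (i : 'I_N) (z : 'rV[R]_d), hyperrect x b z ->
      differentiable (k (xs i)) z)
  (Lb : 'I_N -> 'I_d -> 'cV[R]_2)
  (hbound : forall (i : 'I_N) (j : 'I_d) (z : 'rV[R]_d), hyperrect x b z ->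
      (Lb i j) 1 0 <= 'D_(@unit_vec R d j) (k (xs i)) z <= (Lb i j) 0 0) :
  forall z z' : 'rV[R]_d, hyperrect x b z -> hyperrect x b z' ->
    `|gp_mean k xs y sn2 z - gp_mean k xs y sn2 z'|
      <= L_mu (gp_lambda k xs y sn2) Lb * eucl_norm (z - z').
Proof.
move=> z z' hz hz'.
set lam := gp_lambda k xs y sn2.
have hm : forall i, exists c, hyperrect x b c /\
    k (xs i) z - k (xs i) z' =
    \sum_(j < d) 'D_(unit_vec R j) (k (xs i)) c * (z - z') 0 j.
  by move=> i; have [c h1 h2] := mvt_H (hdiff i) hz hz'; exists c.
have [c hc] := boolp.choice hm.
pose a j := \sum_(i < N) lam i 0 * 'D_(unit_vec R j) (k (xs i)) (c i).
have E : gp_mean k xs y sn2 z - gp_mean k xs y sn2 z' =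
    \sum_(j < d) a j * (z - z') 0 j.
  rewrite /gp_mean -/lam -sumrB.
  rewrite (eq_bigr (fun i => \sum_(j < d) lam i 0 *
      ('D_(unit_vec R j) (k (xs i)) (c i) * (z - z') 0 j))); last first.
    by move=> i _; rewrite -mulrBr (proj2 (hc i)) mulr_sumr.
  rewrite exchange_big /=; apply: eq_bigr => j _.
  by rewrite /a mulr_suml; apply: eq_bigr => i _; rewrite mulrA.
have ha : forall j, (vj lam (fun i => Lb i j)) 1 0 <= a j <= (vj lam (fun i => Lb i j)) 0 0.
  move=> j; rewrite /vj !summxE /a; apply/andP; split; apply: ler_sum => i _;
    rewrite ?Rmat_e0 ?Rmat_e1; have /andP[l1 l2] := hbound i j _ (proj1 (hc i));
    case: ifP => hl; try nra.
rewrite E /L_mu /eucl_norm.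
apply: le_trans; first exact: (cs _ _ a (fun j => (z - z') 0 j)).
apply: ler_wpM2r; first exact: sqrtr_ge0.
rewrite ler_sqrt; last first.
  by apply: sumr_ge0 => j _; rewrite le_max sqr_ge0.
by apply: ler_sum => j _; apply: sq_le_max.
Qed.
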